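(* Let $0<p_i<1$ and $r_i\ge 0$ for $i=1,\dots,n$, indexed so that $r_1/p_1\ge r_2/p_2\ge\dots\ge r_n/p_n$. For $S\subseteq\{1,\dots,n\}$ let $f(S)=\sum_{i\in S} r_i+\prod_{i\in S}(1-p_i)$. Then the maximum of $f(S)$ over all subsets $S$ is attained at $S=\{1,2,\dots,k\}$ for some $0\le k\le n$. *)

(* Defs.v *)
From HB Require Import structures.
From mathcomp Require Import all_boot all_order all_algebra.
Set Implicit Arguments. Unset Strict Implicit. Unset Printing Implicit Defensive.
Import Order.TTheory GRing.Theory Num.Theory.
Local Open Scope ring_scope.

Definition fval (R : realFieldType) (n : nat) (p r : 'I_n -> R) (S : {set 'I_n}) : R :=
  \sum_(i in S) r i + \prod_(i in S) (1 - p i).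

(* the initial segment {1,...,k} (0-based: {0,...,k-1}) *)
Definition prefix_set (n k : nat) : {set 'I_n} := [set i : 'I_n | (i < k)%N].

(* Main.v *)
Require Import Defs.
From HB Require Import structures.
From mathcomp Require Import all_boot all_order all_algebra.
From mathcomp Require Import lra.
Import Order.TTheory GRing.Theory Num.Theory.
Local Open Scope ring_scope.

Section S.
Variables (R : realFieldType) (n : nat) (p r : 'I_n -> R).
Hypothesis hp : forall i, 0 < p i /\ p i < 1.
Hypothesis hord : forall i j : 'I_n, (i <= j)%N -> r j / p j <= r i / p i.

Definition opt (S : {set 'I_n}) := forall T, fval p r T <= fval p r S.

Lemma gap_step S (i j : 'I_n) : opt S -> i \notin S -> j \in S -> (i < j)%N ->
  opt (i |: S).
Proof.
move=> oS iS jS ltij T; apply: le_trans (oS T) _.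
have h1 := oS (S :\ j).
rewrite /fval in h1 *.
rewrite big_setU1 //= [in X in _ <= X]big_setU1 //=.
rewrite !(big_setD1 j jS) /= in h1 *.
set A := \sum_(k in S :\ j) r k in h1 *.
set P := \prod_(k in S :\ j) (1 - p k) in h1 *.
have P0 : 0 <= P by apply: prodr_ge0 => k _; rewrite subr_ge0 ltW //; case: (hp k).
have [pi0 pi1] := hp i; have [pj0 pj1] := hp j.
have hij := @hord i j (ltnW ltij).
have ri : r i = r i / p i * p i by rewrite divfK // gt_eqF.
have rj : r j = r j / p j * p j by rewrite divfK // gt_eqF.
set a := r i / p i in hij ri; set b := r j / p j in hij rj.
have Pb : P <= b.
  have : P * p j <= b * p j by rewrite -rj; lra.
  by rewrite ler_pM2r.
have : p i * P <= r i by rewrite ri mulrC ler_pM2r //; apply: le_trans hij.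
have : 0 <= p i * p j * P by rewrite !mulr_ge0 // ltW.
nra.
Qed.

Lemma gapfree_prefix (S : {set 'I_n}) : (forall i j : 'I_n, (i < j)%N -> i \notin S -> j \notin S) ->
  exists2 k, (k <= n)%N & S = prefix_set n k.
Proof.
move=> gf.
pose P := fun m => [exists j : 'I_n, (j == m :> nat) && (j \notin S)] || (m == n).
have exP : exists m, P m by exists n; rewrite /P eqxx orbT.
case: (ex_minnP exP) => k Pk mink.
have kn : (k <= n)%N by apply: mink; rewrite /P eqxx orbT.
exists k; first exact: kn.
rewrite /prefix_set; apply/setP => x; rewrite inE.
case: (ltnP x k) => xk.
  apply/negPn/negP => xS.
  have : (k <= x)%N by apply: mink; rewrite /P; apply/orP; left; apply/existsP; exists x; rewrite eqxx.
  by rewrite leqNgt xk.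
apply/negP => xS.
case/orP: Pk => [/existsP [j /andP [/eqP jk jS]] | /eqP kE].
  case: (ltngtP j x) => c.
  - by move: (gf _ _ c jS); rewrite xS.
  - by move: c; rewrite jk ltnNge xk.
  - by move: jS; rewrite (val_inj c) xS.
by have := ltn_ord x; rewrite ltnNge; move: xk; rewrite kE => ->.
Qed.

Lemma opt_prefix m (S : {set 'I_n}) : (n - #|S| <= m)%N -> opt S ->
  exists2 k, (k <= n)%N & opt (prefix_set n k).
Proof.
elim: m S => [|m IH] S hm oS.
  have SE : S = setT.
    apply/eqP; rewrite eqEcard subsetT cardsT card_ord.
    by move: hm; rewrite leqn0 subn_eq0.
  exists n => //; have -> : prefix_set n n = S.
    by rewrite SE /prefix_set; apply/setP => x; rewrite !inE ltn_ord.
  exact: oS.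
have [[i [j [c iS jS]]]|gf] : (exists i j : 'I_n, [/\ (i < j)%N, i \notin S & j \in S]) \/
   (forall i j : 'I_n, (i < j)%N -> i \notin S -> j \notin S).
- case: (boolP [exists i : 'I_n, exists j : 'I_n, [&& (i < j)%N, i \notin S & j \in S]]).
    by case/existsP => i /existsP [j /and3P [a b d]]; left; exists i, j.
  rewrite negb_exists => /forallP h; right => i j ij iS.
  move: (h i); rewrite negb_exists => /forallP /(_ j).
  by rewrite ij iS.
- apply: (IH (i |: S)); last exact: (@gap_step S i j oS iS jS c).
  rewrite cardsU1 iS /=.
  by rewrite subnS -subn1; move: hm; case: (n - #|S|)%N => //= t; rewrite subn1.
- by case: (@gapfree_prefix S gf) => k kn SE; exists k; rewrite -?SE.
Qed.
End S.

Theorem claim1 (R : realFieldType) (n : nat) (p r : 'I_n -> R)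
  (hp : forall i, 0 < p i /\ p i < 1)
  (hr : forall i, 0 <= r i)
  (hord : forall i j : 'I_n, (i <= j)%N -> r j / p j <= r i / p i) :
  exists2 k : nat, (k <= n)%N &
    forall S : {set 'I_n}, fval p r S <= fval p r (prefix_set n k).
Proof.
have : exists S, @opt R n p r S.
  exists ([arg max_(S > set0) fval p r S]%O).
  by case: arg_maxP => // S _ h T; apply: h.
case=> S oS.
exact: (@opt_prefix R n p r hp hord (n - #|S|) S (leqnn _) oS).
Qed.
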